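(* The Eigenvector Method violates invariance to $\alpha$-transformation on a triad: there exist $n$ (indeed $n=4$) and pairwise comparison matrices $\mathbf{A},\hat{\mathbf{A}}\in\mathcal{A}^{n\times n}$ such that $\hat{\mathbf{A}}$ is obtained from $\mathbf{A}$ by an $\alpha$-transformation on a triad but the Eigenvector Method weight vectors of $\mathbf{A}$ and $\hat{\mathbf{A}}$ differ.
   Context: A pairwise comparison matrix of size $n$ is a matrix $\mathbf{A} = [a_{i,j}]$ with positive entries and $a_{j,i} = 1/a_{i,j}$ for all $i,j$; $\mathcal{A}^{n\times n}$ denotes the set of these. The Eigenvector Method assigns to $\mathbf{A}$ the vector $\mathbf{w}$ with positive entries, $\sum_i w_i = 1$, and $\mathbf{A}\mathbf{w} = \lambda_{\max}\mathbf{w}$, where $\lambda_{\max}$ is the Perron (maximal) eigenvalue of $\mathbf{A}$. An $\alpha$-transformation on the triad $(i,j,k)$ (three distinct indices), with $\alpha>0$, maps $\mathbf{A}$ to $\hat{\mathbf{A}}$ with $\hat a_{i,j} = \alpha a_{i,j}$, $\hat a_{j,i} = a_{j,i}/\alpha$, $\hat a_{j,k} = \alpha a_{j,k}$, $\hat a_{k,j} = a_{k,j}/\alpha$, $\hat a_{k,i} = \alpha a_{k,i}$, $\hat a_{i,k} = a_{i,k}/\alpha$, all other entries unchanged. *)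

(* Defs.v *)
From HB Require Import structures.
From mathcomp Require Import all_boot all_order all_algebra.
From mathcomp Require Import reals.
Set Implicit Arguments. Unset Strict Implicit. Unset Printing Implicit Defensive.
Import Order.TTheory GRing.Theory Num.Theory.
Local Open Scope ring_scope.

Section Defs.
Variable R : realType.

Definition is_pcm (n : nat) (A : 'M[R]_n) : Prop :=
  forall i j : 'I_n, 0 < A i j /\ A j i = (A i j)^-1.

Definition alpha_transform (n : nat) (A : 'M[R]_n) (i j k : 'I_n) (alpha : R)
  : 'M[R]_n :=
  \matrix_(r, c)
    if [|| (r == i) && (c == j), (r == j) && (c == k) | (r == k) && (c == i)]
    then alpha * A r c
    else if [|| (r == j) && (c == i), (r == k) && (c == j) | (r == i) && (c == k)]
    then A r c / alpha
    else A r c.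

Definition is_eigenvalue (n : nat) (A : 'M[R]_n) (l : R) : Prop :=
  exists v : 'cV[R]_n, v != 0 /\ A *m v = l *: v.

Definition is_lambda_max (n : nat) (A : 'M[R]_n) (l : R) : Prop :=
  is_eigenvalue A l /\ forall m, is_eigenvalue A m -> m <= l.

Definition EM_weight (n : nat) (A : 'M[R]_n) (w : 'cV[R]_n) : Prop :=
  (forall i, 0 < w i 0) /\ \sum_i w i 0 = 1 /\
  exists l, is_lambda_max A l /\ A *m w = l *: w.

End Defs.

(* Main.v *)
From HB Require Import structures.
From mathcomp Require Import all_boot all_order all_algebra.
From mathcomp Require Import reals.
From mathcomp Require Import ring lra.
Require Import Defs.
Import Order.TTheory GRing.Theory Num.Theory.
Local Open Scope ring_scope.

Lemma perron_bound (R : realType) n (A : 'M[R]_n.+1) (w : 'cV[R]_n.+1) l m :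
  (forall i j, 0 <= A i j) -> (forall i, 0 < w i 0) -> A *m w = l *: w ->
  is_eigenvalue A m -> m <= l.
Proof.
move=> A0 w0 Aw [v [v0 Av]].
pose F i := `|v i 0| / w i 0.
case: (@arg_maxP _ _ _ ord0 predT F isT) => i0 _ Hmax.
set t := F i0 in Hmax.
have Hle j : `|v j 0| <= t * w j 0.
  have := Hmax j isT; rewrite /F /= ler_pdivrMr //.
have tpos : 0 < t.
  have [j vj] : exists j, v j 0 != 0.
    apply/existsP; apply: contraNT v0 => /existsPn H.
    apply/eqP/matrixP => i k; rewrite ord1 mxE; exact/eqP/negbNE/H.
  have := Hle j; have : 0 < `|v j 0| by rewrite normr_gt0.
  move=> h1 h2; have := lt_le_trans h1 h2; rewrite pmulr_lgt0 //.
have vi0 : 0 < `|v i0 0| by rewrite /t /F in tpos; move: tpos; rewrite pmulr_lgt0 ?invr_gt0 //.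
have e1 : `|m| * `|v i0 0| <= l * `|v i0 0|.
  have -> : `|m| * `|v i0 0| = `|(A *m v) i0 0|.
    by rewrite Av mxE normrM.
  rewrite mxE; apply: (le_trans (ler_norm_sum _ _ _)).
  apply: (@le_trans _ _ (\sum_j A i0 j * (t * w j 0))).
    apply: ler_sum => j _; rewrite normrM ger0_norm //; exact: ler_wpM2l.
  have : (A *m w) i0 0 = l * w i0 0 by rewrite Aw mxE.
  rewrite mxE => e.
  have -> : \sum_j A i0 j * (t * w j 0) = t * \sum_j A i0 j * w j 0.
    by rewrite mulr_sumr; apply: eq_bigr => j _; ring.
  rewrite e /t /F.
  rewrite le_eqVlt; apply/orP; left; apply/eqP.
  have := w0 i0; move: (w i0 0) => x hx; field; exact: lt0r_neq0.
have : `|m| <= l by rewrite -(ler_pM2r vi0).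
exact: le_trans (ler_norm m).
Qed.

Lemma EM_of (R : realType) n (A : 'M[R]_n.+1) (w : 'cV[R]_n.+1) l :
  (forall i j, 0 <= A i j) -> (forall i, 0 < w i 0) -> \sum_i w i 0 = 1 ->
  A *m w = l *: w -> EM_weight A w.
Proof.
move=> A0 w0 ws Aw; split=> //; split=> //; exists l; split=> //.
split; last by move=> m; exact: perron_bound Aw.
exists w; split=> //; apply/negP => /eqP h; have := w0 ord0.
by rewrite h mxE ltxx.
Qed.

Definition fA (R : realType) (i j : nat) : R :=
  match i, j with
  | 0, 1 => 1/2 | 1, 2 => 1/2 | 2, 0 => 1/2
  | 1, 0 => 2 | 2, 1 => 2 | 0, 2 => 2
  | _, _ => 1 end.

Definition Amat (R : realType) : 'M[R]_4 := \matrix_(i, j) fA R i j.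
Definition Jmat (R : realType) : 'M[R]_4 := \matrix_(i, j) 1.

Theorem proposition3p2 (R : realType) :
  exists (A Ahat : 'M[R]_4) (i j k : 'I_4) (alpha : R),
    [/\ i != j, j != k & i != k] /\ 0 < alpha /\
    is_pcm A /\ is_pcm Ahat /\ Ahat = alpha_transform A i j k alpha /\
    (exists w : 'cV[R]_4, EM_weight A w) /\
    (exists w : 'cV[R]_4, EM_weight Ahat w) /\
    (forall w what : 'cV[R]_4, EM_weight A w -> EM_weight Ahat what -> w != what).
Proof.
exists (Amat R), (Jmat R), 0, 1, 2%:R, 2.
split; first by [].
split; first by lra.
split.
  move=> i j; rewrite !mxE.
  by case: i => [[|[|[|[|i]]]] Hi] //; case: j => [[|[|[|[|j]]]] Hj] //=;
     split; rewrite ?invr1 //; lra.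
split.
  by move=> i j; rewrite !mxE invr1; split; [lra|].
split.
  apply/matrixP => i j; rewrite !mxE.
  case: i => [[|[|[|[|i]]]] Hi] //; case: j => [[|[|[|[|j]]]] Hj] //=; lra.
have A0 : forall i j, 0 <= Amat R i j.
  move=> i j; rewrite !mxE.
  by case: i => [[|[|[|[|i]]]] Hi] //; case: j => [[|[|[|[|j]]]] Hj] //=; lra.
have J0 : forall i j, 0 <= Jmat R i j by move=> i j; rewrite mxE ler01.
pose r : R := Num.sqrt 73.
have r2 : r ^+ 2 = 73 by rewrite sqr_sqrtr //.
have r0 : 0 <= r by exact: sqrtr_ge0.
have r5 : 5 < r by nra.
pose y := (r - 5) / 4.
have y0 : 0 < y by rewrite /y; lra.
have yq : y ^+ 2 + 5 / 2 * y - 3 = 0 by rewrite /y; nra.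
clearbody y.
pose wA : 'cV[R]_4 := \col_i ((if (val i == 3)%N then y else 1) / (3 + y)).
pose wJ : 'cV[R]_4 := \col_i (1 / 4).
have EA : EM_weight (Amat R) wA.
  apply: (@EM_of _ _ _ _ (7 / 2 + y)) => //.
  - move=> i; rewrite mxE; case: ifP => _; apply: divr_gt0; lra.
  - rewrite !big_ord_recl big_ord0 /= !mxE /=; field; lra.
  - apply/matrixP => i j; rewrite ord1 !mxE !big_ord_recl big_ord0 /= !mxE /=.
    have y3 : 3 + y != 0 by apply/lt0r_neq0; lra.
    clear wJ wA; case: i => [[|[|[|[|i]]]] Hi] //=.
1: field; rewrite ?y3 //; nra.
1: field; rewrite ?y3 //; nra.
1: field; rewrite ?y3 //; nra.
1: have e : (7/2+y)*y = 3+y by nra.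
1: rewrite [RHS]mulrA e; field; rewrite ?y3 //.
have EJ : EM_weight (Jmat R) wJ.
  apply: (@EM_of _ _ _ _ 4) => //.
  - by move=> i; rewrite mxE; lra.
  - by rewrite !big_ord_recl big_ord0 /= !mxE /=; lra.
  - apply/matrixP => i j; rewrite ord1 !mxE !big_ord_recl big_ord0 /= !mxE /=; lra.
split; first by exists wA.
split; first by exists wJ.
move=> w what [_ [_ [l [_ Hl]]]] [wp [ws [l' [_ Hl']]]].
have hw i : what i 0 = 1 / 4.
  have E k : l' * what k 0 = 1.
    have := congr1 (fun M : 'M[R]_(4,1) => M k 0) Hl'.
    rewrite !mxE => <-; rewrite -ws; apply: eq_bigr => j _; by rewrite mxE mul1r.
  have hl : l' = 4.
    have : l' * \sum_i what i 0 = 4.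
      rewrite mulr_sumr (eq_bigr (fun _ => 1)) => [|k _]; last exact: E.
      by rewrite sumr_const card_ord.
    by rewrite ws mulr1.
  by have := E i; rewrite hl; lra.
apply/negP => /eqP ew; subst w.
have := congr1 (fun M : 'M[R]_(4,1) => M 0 0) Hl; have := congr1 (fun M : 'M[R]_(4,1) => M 3%:R 0) Hl.
rewrite !mxE !big_ord_recl !big_ord0 /= !mxE !hw /=.
move=> h1 h2; lra.
Qed.
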